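(* For every integer $\chi\geq 3$, $\vec{R}(\chi)\geq \vec{R}(\chi-1)+2$.
   Context: $TT_\ell$ denotes the transitive (acyclic) tournament on $\ell$ vertices, and $\vec{R}(\ell)$ is the least integer $N$ such that every tournament on at least $N$ vertices contains a copy of $TT_\ell$. *)

(* Defs.v *)
From mathcomp Require Import all_boot.
Set Implicit Arguments. Unset Strict Implicit. Unset Printing Implicit Defensive.

Definition is_tournament (T : finType) (beats : rel T) : Prop :=
  (forall x, ~~ beats x x) /\
  (forall x y, x != y -> (beats x y) (+) (beats y x)).

Definition contains_TT (T : finType) (beats : rel T) (l : nat) : Prop :=
  exists f : 'I_l -> T, injective f /\ (forall i j : 'I_l, i < j -> beats (f i) (f j)).

Definition forces_TT (l N : nat) : Prop :=
  forall (T : finType) (beats : rel T),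
    is_tournament beats -> N <= #|T| -> contains_TT beats l.

Definition is_dir_ramsey (l N : nat) : Prop :=
  forces_TT l N /\ (forall M, forces_TT l M -> N <= M).

(* Main.v *)
Require Import Defs.
From Stdlib Require Import Classical.
From mathcomp Require Import all_boot.

Set Implicit Arguments. Unset Strict Implicit. Unset Printing Implicit Defensive.

Definition ext (T : finType) (b : rel T) : rel (option (option T)) :=
  fun u v => match u, v with
  | None, Some (Some _) => true
  | Some None, None => true
  | Some (Some _), Some None => true
  | Some (Some a), Some (Some c) => b a c
  | _, _ => false end.

Lemma ext_tour (T : finType) (b : rel T) : is_tournament b -> is_tournament (ext b).
Proof.
move=> [Hi Hx]; split.
  by case=> [[a|]|] //=; apply: Hi.
case=> [[a|]|] [[c|]|] //= H; apply: Hx.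
by apply: contraNneq H => ->.
Qed.

Lemma ext_TT (T : finType) (b : rel T) n :
  contains_TT (ext b) n.+3 -> contains_TT b n.+2.
Proof.
move=> [f [finj ford]].
have Hx : forall i : 'I_n.+3, f i = None -> val i = 0.
  move=> i fi; case: (posnP i) => // ip; exfalso.
  have f0 : f ord0 = Some None.
    have := ford ord0 i ip; rewrite fi; by case: (f ord0) => [[]|].
  pose j : 'I_n.+3 := if val i == 1 then inord 2 else inord 1.
  have ji : val j != val i.
    rewrite /j; case Ei: (val i == 1); rewrite /= inordK //.
      by move/eqP: Ei => ->.
    by rewrite eq_sym Ei.
  have j0 : val j != 0 by rewrite /j; case: (val i == 1); rewrite /= inordK.
  case: (ltngtP j i) => [ji'| ij |/eqP]; last by rewrite (negbTE ji).
  - have := ford j i ji'; rewrite fi.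
    case E: (f j) => [[a|]|] //= _.
    by move: j0; rewrite -E in f0; have ej := finj _ _ f0; rewrite -ej.
  - have := ford ord0 j; rewrite lt0n j0 f0 => /(_ isT).
    have := ford i j ij; rewrite fi.
    by case: (f j) => [[a|]|].
have Hy : forall i : 'I_n.+3, f i = Some None -> val i = n.+2.
  move=> i fi; case: (ltngtP i n.+2) => [ip|ip|//]; last by have := ltn_ord i; rewrite ltnS leqNgt ip.
  exfalso; have := ford i ord_max ip; rewrite fi.
  case E: (f ord_max) => [[a|]|] //= _.
  by have := Hx _ E.
have noboth : forall i k : 'I_n.+3, f i = None -> f k = Some None -> False.
  move=> i k fi fk; have i0 := Hx _ fi; have k0 := Hy _ fk.
  by have := ford i k; rewrite i0 k0 fi fk => /(_ isT).
suff [h [hinj [hord hT]]] : exists h : 'I_n.+2 -> 'I_n.+3,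
    injective h /\ (forall i j : 'I_n.+2, i < j -> h i < h j) /\
    (forall i, exists t, f (h i) = Some (Some t)).
  have [t0 _] := hT ord0.
  pose g i := odflt t0 (odflt None (f (h i))).
  have gE : forall i, f (h i) = Some (Some (g i)).
    by move=> i; rewrite /g; have [t ->] := hT i.
  exists g; split.
    by move=> i j gij; apply: hinj; apply: finj; rewrite !gE gij.
  by move=> i j ij; have := ford _ _ (hord _ _ ij); rewrite !gE.
case: (classic (exists i, f i = None)) => [[i0 fi0]|nox].
- exists (lift ord0); split; first exact: lift_inj.
  split; first by move=> i j; rewrite /= /bump !leq0n.
  move=> i; case E: (f (lift ord0 i)) => [[a|]|]; first by exists a.
    by exfalso; apply: (noboth _ _ fi0 E).
  by have := Hx _ E.
- exists (widen_ord (leqnSn _)); split; first by move=> a c /(congr1 val) /= ac; apply: val_inj.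
  split; first by [].
  move=> i; case E: (f (widen_ord (leqnSn _) i)) => [[a|]|]; first by exists a.
    by have := Hy _ E => /= ie; have := ltn_ord i; rewrite ie ltnn.
  by exfalso; apply: nox; exists (widen_ord (leqnSn _) i).
Qed.

Theorem proposition5p3 (chi : nat) (Hchi : 3 <= chi) (R1 R2 : nat) :
  is_dir_ramsey chi.-1 R1 -> is_dir_ramsey chi R2 -> R1 + 2 <= R2.
Proof.
case: chi Hchi => [|[|[|n]]] // _ [F1 M1] [F2 _].
case: R1 F1 M1 => [|r1] F1 M1.
  have tv : is_tournament (fun _ _ : void => false) by split; case.
  by have [f _] := F1 _ _ tv (leq0n _); case: (f ord0).
case: (leqP (r1.+1 + 2) R2) => // HR; exfalso.
suff : forces_TT n.+2 r1 by move/M1; rewrite ltnn.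
move=> T b tb Hc.
case: (classic (contains_TT b n.+2)) => // nc; exfalso; apply: nc.
apply: ext_TT; apply: F2; first exact: ext_tour.
rewrite !card_option; move: HR; rewrite addn2 ltnS => HR.
by apply: leq_trans HR _; rewrite ltnS ltnS.
Qed.
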